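(* Consider full-batch Noisy-SGD ($\mathcal{B}_t=\mathcal{B}_t'=[n]$) on adjacent datasets $\mathcal{D},\mathcal{D}'$, with iterates $W_t,W_t'$ and $W_0=W_0'$. Suppose the gradient update maps $\psi_t(x)=x-\frac{\eta}{n}\sum_{i\in[n]}\Pi_{B_K}[\nabla\ell_i(x)]$ and $\psi_t'(x)=x-\frac{\eta}{n}\sum_{i\in[n]}\Pi_{B_K}[\nabla\ell_i'(x)]$ are $c$-Lipschitz for some $c\ge0$. Then for all $t\ge0$, $$W_\infty(W_t,W_t')\le\min(D_t,D),\qquad D_t=\min\big(cD_{t-1}+2\eta K/n,\ D_{t-1}+2\eta K\big),\quad D_0=0.$$
   Context: Setting (Noisy-SGD). Let $\mathcal{K}\subset\mathbb{R}^d$ be a nonempty closed convex set of diameter $D$, $\Pi_{\mathcal{K}}$ the Euclidean projection. Let $\ell(\cdot;d)$, $d\in\mathcal{X}$, be differentiable losses on $\mathcal{K}$; for $\mathcal{D}=(d_1,\dots,d_n)$ write $\ell_i=\ell(\cdot;d_i)$, and $\ell_i'=\ell(\cdot;d_i')$ for $\mathcal{D}'$. $\Pi_{B_K}(v)=v\min(1,K/\|v\|)$. Noisy-SGD: $W_{t+1}=\Pi_{\mathcal{K}}\big[W_t-\eta\frac1b\sum_{i\in\mathcal{B}_t}\Pi_{B_K}[\nabla\ell_i(W_t)]+G_t\big]$, $G_t$ i.i.d. $N(0,\sigma^2I_d)$ independent of everything else; $W_t'$ is defined analogously on $\mathcal{D}'$ with its own noise $G_t'$ of the same law. Adjacent datasets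 differ in exactly one index. The infinite Wasserstein distance between laws $\mu,\nu$ on $\mathbb{R}^d$ is $W_\infty(\mu,\nu)=\inf_{\gamma\in\Gamma(\mu,\nu)}\operatorname{ess\,sup}_{(X,Y)\sim\gamma}\|X-Y\|$, $\Gamma(\mu,\nu)$ the set of couplings; $W_\infty(W_t,W_t')$ refers to the laws of $W_t,W_t'$. *)

(* Defs.v *)
From HB Require Import structures.
From mathcomp Require Import all_boot all_order all_algebra.
From mathcomp Require Import all_classical all_reals all_analysis.
From mathcomp Require Import ess_sup_inf.
Set Implicit Arguments. Unset Strict Implicit. Unset Printing Implicit Defensive.
Import Order.TTheory GRing.Theory Num.Theory.
Import numFieldNormedType.Exports.
Local Open Scope classical_set_scope.
Local Open Scope ring_scope.

Section Defs.
Variables (R : realType) (d : nat).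

Definition enorm (v : 'rV[R]_d) : R := Num.sqrt (\sum_(j < d) v ord0 j ^+ 2).

Definition edot (u v : 'rV[R]_d) : R := \sum_(j < d) u ord0 j * v ord0 j.

(** Pi_{B_K}(v) = v * min(1, K/||v||)  (with v = 0 mapped to 0). *)
Definition clipK (K : R) (v : 'rV[R]_d) : 'rV[R]_d :=
  Num.min 1 (K / enorm v) *: v.

Definition vecB : Type := g_sigma_algebraType (@open 'rV[R]_d).

Definition law dO (Omega : measurableType dO) (P : probability Omega R)
  (X : Omega -> 'rV[R]_d) : set vecB -> \bar R :=
  fun A => P (X @^-1` A).

Definition coupling (mu nu : set vecB -> \bar R)
  (g : probability (vecB * vecB)%type R) : Prop :=
  (forall A : set vecB, measurable A -> g (A `*` setT) = mu A) /\
  (forall A : set vecB, measurable A -> g (setT `*` A) = nu A).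

Definition Winf (mu nu : set vecB -> \bar R) : \bar R :=
  ereal_inf [set ess_sup g (fun p : vecB * vecB => (enorm (p.1 - p.2))%:E)
            | g in coupling mu nu].


Definition psi (eta Kc : R) (n : nat) (g : 'I_n -> 'rV[R]_d -> 'rV[R]_d)
  (x : 'rV[R]_d) : 'rV[R]_d :=
  x - (eta / n%:R) *: \sum_(i < n) clipK Kc (g i x).

Fixpoint nsgd (Omega : Type) (PiK : 'rV[R]_d -> 'rV[R]_d)
  (step : 'rV[R]_d -> 'rV[R]_d) (G : nat -> Omega -> 'rV[R]_d)
  (w0 : 'rV[R]_d) (t : nat) (om : Omega) : 'rV[R]_d :=
  match t with
  | 0%N => w0
  | t'.+1 => PiK (step (nsgd PiK step G w0 t' om) + G t' om)
  end.

Definition mutually_independent dO (Omega : measurableType dO)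
  (P : probability Omega R) (I : eqType) (Y : I -> Omega -> R) : Prop :=
  forall (s : seq I) (B : I -> set R), uniq s -> (forall i, measurable (B i)) ->
    P (\bigcap_(i in [set` s]) (Y i @^-1` B i)) =
    (\prod_(i <- s) P (Y i @^-1` B i))%E.

(** (G_t)_t is an i.i.d. sequence of N(0, sigma^2 I_d) random vectors:
    all coordinates G_t[j] (over all t and j) are measurable, mutually
    independent, and each has law N(0, sigma^2). *)
Definition gaussian_noise dO (Omega : measurableType dO)
  (P : probability Omega R) (sigma : R) (G : nat -> Omega -> 'rV[R]_d) : Prop :=
  [/\ forall t (j : 'I_d), measurable_fun setT (fun om => G t om ord0 j),
      forall t (j : 'I_d) (B : set R), measurable B ->
        P ((fun om => G t om ord0 j) @^-1` B) = normal_prob 0 sigma B &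
      mutually_independent P (fun p : nat * 'I_d => fun om => G p.1 om ord0 p.2)].

End Defs.

Fixpoint Dseq (R : realType) (c eta Kc : R) (n : nat) (t : nat) : R :=
  match t with
  | 0%N => 0
  | t'.+1 => Num.min (c * Dseq c eta Kc n t' + 2 * eta * Kc / n%:R)
                     (Dseq c eta Kc n t' + 2 * eta * Kc)
  end.

(* Main.v *)
Require Import Defs.
From HB Require Import structures.
From mathcomp Require Import all_boot all_order all_algebra.
From mathcomp Require Import all_classical all_reals all_analysis.
From mathcomp Require Import ess_sup_inf.
From mathcomp Require Import ring lra.
Import Order.TTheory GRing.Theory Num.Theory.
Import numFieldNormedType.Exports.
Local Open Scope classical_set_scope.
Local Open Scope ring_scope.
Set Implicit Arguments. Unset Strict Implicit. Unset Printing Implicit Defensive.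

Section Alg.
Variables (R : realType) (d : nat).
Implicit Types u v w x y : 'rV[R]_d.

Definition sqn v : R := \sum_(j < d) v ord0 j ^+ 2.

Lemma sqn_ge0 v : 0 <= sqn v.
Proof. by apply: sumr_ge0 => j _; exact: sqr_ge0. Qed.

Lemma enormE v : enorm v = Num.sqrt (sqn v).
Proof. by []. Qed.

Lemma enorm_ge0 v : 0 <= enorm v.
Proof. exact: sqrtr_ge0. Qed.

Lemma enorm_sq v : enorm v ^+ 2 = sqn v.
Proof. by rewrite enormE sqr_sqrtr // sqn_ge0. Qed.

Lemma edotvv v : edot v v = sqn v.
Proof. by apply: eq_bigr => j _; rewrite expr2. Qed.

Lemma edotC u v : edot u v = edot v u.
Proof. by apply: eq_bigr => j _; rewrite mulrC. Qed.

Lemma edot_lin a b u v w : edot (a *: u + b *: v) w = a * edot u w + b * edot v w.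
Proof.
rewrite /edot !mulr_sumr -big_split /=; apply: eq_bigr => j _.
by rewrite !mxE; ring.
Qed.

Lemma sqn_lin a b u v :
  sqn (a *: u + b *: v) = a ^+ 2 * sqn u + 2 * a * b * edot u v + b ^+ 2 * sqn v.
Proof.
rewrite /sqn /edot !mulr_sumr -!big_split /=; apply: eq_bigr => j _.
by rewrite !mxE; ring.
Qed.

Lemma lin_sub u v : u - v = 1 *: u + (-1) *: v.
Proof. by rewrite scale1r scaleN1r. Qed.

Lemma sqnB u v : sqn (u - v) = sqn u - 2 * edot u v + sqn v.
Proof. rewrite lin_sub sqn_lin; ring. Qed.

Lemma sqnD u v : sqn (u + v) = sqn u + 2 * edot u v + sqn v.
Proof. have := sqn_lin 1 1 u v; rewrite !scale1r => ->; ring. Qed.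

Lemma edotB u v w : edot (u - v) w = edot u w - edot v w.
Proof. rewrite lin_sub edot_lin; ring. Qed.

Lemma edotD u v w : edot (u + v) w = edot u w + edot v w.
Proof. have := edot_lin 1 1 u v w; rewrite !scale1r => ->; ring. Qed.

Lemma edotBr u v w : edot w (u - v) = edot w u - edot w v.
Proof. by rewrite edotC edotB !(edotC w). Qed.

Lemma sqn_eq0 v : sqn v = 0 -> v = 0.
Proof.
move=> /psumr_eq0P h; apply/rowP => j; rewrite mxE.
by apply/eqP; rewrite -sqrf_eq0; apply/eqP/h => // i _; exact: sqr_ge0.
Qed.

Lemma sqn0 : sqn 0 = 0.
Proof. by rewrite /sqn big1 // => j _; rewrite mxE expr0n. Qed.

Lemma enorm0 : enorm (0 : 'rV[R]_d) = 0.
Proof. by rewrite enormE sqn0 sqrtr0. Qed.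

Lemma enorm_eq0 v : enorm v = 0 -> v = 0.
Proof. by move=> h; apply: sqn_eq0; rewrite -enorm_sq h expr0n. Qed.

Lemma cs_sq u v : edot u v ^+ 2 <= sqn u * sqn v.
Proof.
have [u0|] := eqVneq (sqn u) 0.
  by rewrite (sqn_eq0 u0) /edot big1 ?expr0n ?sqn0 ?mul0r // => j _; rewrite mxE mul0r.
move=> un0; have up : 0 < sqn u by rewrite lt0r un0 sqn_ge0.
have := sqn_ge0 (sqn u *: v + (- edot u v) *: u).
rewrite sqn_lin (edotC v u).
have -> : sqn u ^+ 2 * sqn v + 2 * sqn u * - edot u v * edot u v + (- edot u v) ^+ 2 * sqn u
  = sqn u * (sqn u * sqn v - edot u v ^+ 2) by ring.
by rewrite pmulr_rge0 // subr_ge0.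
Qed.

Lemma cs u v : edot u v <= enorm u * enorm v.
Proof.
apply: (le_trans (ler_norm _)).
rewrite !enormE -sqrtrM ?sqn_ge0 // -sqrtr_sqr.
by rewrite ler_sqrt ?mulr_ge0 ?sqn_ge0 // cs_sq.
Qed.



Lemma enormD u v : enorm (u + v) <= enorm u + enorm v.
Proof.
rewrite enormE -(ger0_norm (addr_ge0 (enorm_ge0 u) (enorm_ge0 v))).
rewrite -sqrtr_sqr ler_sqrt ?sqr_ge0 // sqnD.
rewrite -!enorm_sq sqrrD; have := cs u v; lra.
Qed.

Lemma enormN v : enorm (- v) = enorm v.
Proof. by rewrite /enorm; congr Num.sqrt; apply: eq_bigr => j _; rewrite mxE sqrrN. Qed.

Lemma enormZ a v : enorm (a *: v) = `|a| * enorm v.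
Proof.
rewrite /enorm -sqrtr_sqr -sqrtrM ?sqr_ge0 //; congr Num.sqrt.
by rewrite mulr_sumr; apply: eq_bigr => j _; rewrite mxE exprMn.
Qed.

Lemma enormB u v : enorm (u - v) <= enorm u + enorm v.
Proof. by rewrite -(enormN v) enormD. Qed.

Lemma enorm_sum n (F : 'I_n -> 'rV[R]_d) : enorm (\sum_(i < n) F i) <= \sum_(i < n) enorm (F i).
Proof.
elim/big_ind2: _ => [|a b x y ha hb|//]; first by rewrite enorm0.
by apply: le_trans (enormD _ _) _; exact: lerD.
Qed.

Lemma enorm_coord v (j : 'I_d) : `|v ord0 j| <= enorm v.
Proof.
rewrite -sqrtr_sqr ler_sqrt ?sqn_ge0 // /sqn (bigD1 j) //= lerDl.
by apply: sumr_ge0 => i _; exact: sqr_ge0.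
Qed.

Lemma sqn_le_box v (e : R) : 0 <= e -> (forall j, `|v ord0 j| <= e) -> sqn v <= d%:R * e ^+ 2.
Proof.
move=> e0 h; apply: (@le_trans _ _ (\sum_(j < d) e ^+ 2)); last first.
  by rewrite sumr_const card_ord mulr_natl.
apply: ler_sum => j _; rewrite -real_normK ?num_real //.
by rewrite lerXn2r ?nnegrE // normr_ge0.
Qed.

End Alg.

Section Proj.
Variables (R : realType) (d : nat) (K : set 'rV[R]_d) (PiK : 'rV[R]_d -> 'rV[R]_d).

Definition isproj := forall x, K (PiK x) /\ (forall y, K y -> enorm (x - PiK x) <= enorm (x - y)).
Definition isconv := forall x y (l : R), K x -> K y -> 0 <= l <= 1 -> K (l *: x + (1 - l) *: y).

Lemma enorm_le_sqn (u v : 'rV[R]_d) : enorm u <= enorm v -> sqn u <= sqn v.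
Proof. by rewrite !enormE ler_sqrt ?sqn_ge0. Qed.

Lemma proj_var (hc : isconv) (hp : isproj) x y : K y ->
  edot (x - PiK x) (y - PiK x) <= 0.
Proof.
move=> Ky; set p := PiK x; have Kp : K p by case: (hp x).
set a := sqn (y - p); set b := edot (x - p) (y - p).
have key : forall l, 0 < l <= 1 -> 2 * l * b <= l ^+ 2 * a.
  move=> l /andP[l0 l1].
  have Kz : K (l *: y + (1 - l) *: p) by apply: hc => //; rewrite ltW.
  have := enorm_le_sqn ((hp x).2 _ Kz).
  have -> : x - (l *: y + (1 - l) *: p) = 1 *: (x - p) + (- l) *: (y - p).
    by rewrite scale1r scalerBr scalerBl scale1r scaleNr; apply/rowP => j; rewrite !mxE; ring.
  rewrite sqn_lin -/p -/a -/b; lra.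
rewrite leNgt; apply/negP => b0.
have a0 : 0 <= a by exact: sqn_ge0.
set l := b / (a + b).
have ab0 : 0 < a + b by lra.
have lab : l * (a + b) = b by rewrite /l mulfVK // gt_eqF.
have l0 : 0 < l by rewrite divr_gt0.
have l1 : l <= 1 by rewrite /l ler_pdivrMr // mul1r; lra.
have := key l; rewrite l0 l1 => /(_ isT) h.
have h2 : 2 * b <= l * a.
  rewrite -(ler_pM2l l0).
  have -> : l * (2 * b) = 2 * l * b by ring.
  by have -> : l * (l * a) = l ^+ 2 * a by ring.
nra.
Qed.

Lemma proj_nonexp (hc : isconv) (hp : isproj) x y :
  enorm (PiK x - PiK y) <= enorm (x - y).
Proof.
have h1 := proj_var hc hp x (proj1 (hp y)).
have h2 := proj_var hc hp y (proj1 (hp x)).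
set p := PiK x in h1 h2 *; set q := PiK y in h1 h2 *.
have e : sqn (p - q) <= edot (x - y) (p - q).
  move: h1 h2; rewrite !edotB !edotBr -!edotvv !edotB !edotBr.
  rewrite ?(edotC q p) ?(edotC y p) ?(edotC q x) ?(edotC y x); lra.
have h := cs (x - y) (p - q); rewrite -enorm_sq in e.
have hp0 := enorm_ge0 (p - q); have hx0 := enorm_ge0 (x - y).
have : enorm (p - q) ^+ 2 <= enorm (x - y) * enorm (p - q) by lra.
nra.
Qed.

Lemma proj_id (hp : isproj) x : K x -> PiK x = x.
Proof.
move=> Kx; have := (hp x).2 _ Kx; rewrite subrr enorm0 => h.
have : enorm (x - PiK x) = 0 by apply: le_anti; rewrite h enorm_ge0.
by move/enorm_eq0/eqP; rewrite subr_eq0 => /eqP.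
Qed.

End Proj.

Section Psi.
Variables (R : realType) (d : nat).

Lemma clip_le (Kc : R) (v : 'rV[R]_d) : 0 < Kc -> enorm (clipK Kc v) <= Kc.
Proof.
move=> K0; rewrite /clipK enormZ.
have [v0|vn0] := eqVneq (enorm v) 0; first by rewrite v0 mulr0 ltW.
have vp : 0 < enorm v by rewrite lt0r vn0 enorm_ge0.
have m0 : 0 <= Num.min 1 (Kc / enorm v).
  by rewrite le_min ler01 divr_ge0 // ?ltW.
rewrite ger0_norm //.
apply: (@le_trans _ _ (Kc / enorm v * enorm v)); last by rewrite mulfVK // gt_eqF.
by rewrite ler_pM2r // ge_min lexx orbT.
Qed.

Lemma enorm_sum_clip n (Kc : R) (g : 'I_n -> 'rV[R]_d -> 'rV[R]_d) x : 0 < Kc ->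
  enorm (\sum_(i < n) clipK Kc (g i x)) <= n%:R * Kc.
Proof.
move=> K0; apply: le_trans (enorm_sum _) _.
apply: (@le_trans _ _ (\sum_(i < n) Kc)); first by apply: ler_sum => i _; exact: clip_le.
by rewrite sumr_const card_ord mulr_natl.
Qed.

Variables (eta Kc : R) (n : nat) (g g' : 'I_n -> 'rV[R]_d -> 'rV[R]_d).
Hypothesis (eta0 : 0 < eta) (K0 : 0 < Kc) (n0 : (0 < n)%N).

Lemma n_gt0 : 0 < n%:R :> R.
Proof. by rewrite ltr0n. Qed.

Lemma psi_diff x y : psi eta Kc g x - psi eta Kc g' y =
  (x - y) - (eta / n%:R) *: (\sum_(i < n) clipK Kc (g i x) - \sum_(i < n) clipK Kc (g' i y)).
Proof. by rewrite /psi scalerBr; apply/rowP => j; rewrite !mxE; ring. Qed.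

Lemma psi_bound2 x y : enorm (psi eta Kc g x - psi eta Kc g' y) <= enorm (x - y) + 2 * eta * Kc.
Proof.
rewrite psi_diff; apply: le_trans (enormB _ _) _; rewrite lerD2l enormZ.
have a0 : 0 <= eta / n%:R by rewrite divr_ge0 // ltW // n_gt0.
rewrite ger0_norm //.
apply: (@le_trans _ _ (eta / n%:R * (n%:R * Kc + n%:R * Kc))).
  rewrite ler_wpM2l //; apply: le_trans (enormB _ _) _.
  by rewrite lerD // enorm_sum_clip.
have nn := n_gt0; rewrite -mulrDl -mulr2n -mulr_natl.
by rewrite le_eqVlt; apply/orP; left; apply/eqP; field; rewrite gt_eqF.
Qed.

Lemma psi_bound1 (j : 'I_n) y : (forall i, i != j -> g i = g' i) ->
  enorm (psi eta Kc g y - psi eta Kc g' y) <= 2 * eta * Kc / n%:R.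
Proof.
move=> hg; rewrite psi_diff subrr sub0r enormN enormZ.
rewrite (bigD1 j) //= [X in _ - X](bigD1 j) //=.
rewrite (eq_bigr (fun i => clipK Kc (g' i y))); last by move=> i /hg ->.
rewrite opprD addrACA subrr addr0.
have a0 : 0 <= eta / n%:R by rewrite divr_ge0 // ltW // n_gt0.
rewrite ger0_norm //.
apply: (@le_trans _ _ (eta / n%:R * (Kc + Kc))).
  by rewrite ler_wpM2l //; apply: le_trans (enormB _ _) _; rewrite lerD // clip_le.
have nn := n_gt0.
by rewrite le_eqVlt; apply/orP; left; apply/eqP; field; rewrite gt_eqF.
Qed.

End Psi.

Section Meas.
Variables (R : realType) (d : nat).
Local Notation V := 'rV[R]_d.

Lemma ball_coord (v w : V) e : ball v e w -> forall j, `|v ord0 j - w ord0 j| < e.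
Proof. by move=> [e0 h] j; have := h ord0 j. Qed.

Lemma ball_of_coord (v w : V) e : 0 < e -> (forall j, `|v ord0 j - w ord0 j| < e) -> ball v e w.
Proof. by move=> e0 h; split => // i j; rewrite (ord1 i); exact: h. Qed.

Lemma coord_cont (j : 'I_d) : continuous (fun v : V => v ord0 j).
Proof.
exact: coord_continuous.
Qed.

Lemma coord_meas (j : 'I_d) : measurable_fun setT (fun v : vecB R d => v ord0 j).
Proof.
apply: (measurability _ (measurable_realfun.RGenOpens.measurableE R)).
move=> _ [_ [a [b ->] <-]]; rewrite setTI; apply: sub_sigma_algebra.
by have := coord_cont (j:=j); move=> /continuousP; apply; exact: interval_open.
Qed.

Lemma enorm_box (v : V) (del : R) : 0 <= del -> (forall j, `|v ord0 j| <= del) ->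
  enorm v <= d%:R * del.
Proof.
move=> d0 h; rewrite enormE -(ger0_norm (mulr_ge0 (ler0n _ d) d0)) -sqrtr_sqr.
rewrite ler_sqrt ?sqr_ge0 //; apply: le_trans (sqn_le_box d0 h) _.
rewrite exprMn ler_wpM2r ?sqr_ge0 // -natrX ler_nat.
by case: d => // k; rewrite expnS leq_pmulr.
Qed.

Lemma lip_cont (h : V -> V) (L : R) : 0 <= L ->
  (forall x y, enorm (h x - h y) <= L * enorm (x - y)) -> continuous h.
Proof.
move=> L0 hl v s /= /nbhs_ballP [e e0 es]; apply/nbhs_ballP.
have dL0 : 0 < L * d%:R + 1 by rewrite ltr_wpDl // mulr_ge0.
exists (e / (L * d%:R + 1)); first by rewrite /= divr_gt0.
move=> w bw; apply: es; apply: ball_of_coord => // j.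
apply: (@le_lt_trans _ _ (enorm (h w - h v))).
  by rewrite distrC; have := enorm_coord (h w - h v) j; rewrite !mxE.
apply: le_lt_trans; first exact: hl.
have bw' : forall j, `|(w - v) ord0 j| <= e / (L * d%:R + 1).
  move=> i; rewrite !mxE distrC ltW //. exact: (ball_coord bw).
have := enorm_box (ltW (divr_gt0 e0 dL0)) bw' => hb.
have hb2 : L * enorm (w - v) <= L * (d%:R * (e / (L * d%:R + 1))).
  by apply: ler_wpM2l.
apply: (le_lt_trans hb2).
rewrite !mulrA ltr_pdivrMr // mulrDr mulr1 [e * _]mulrC ltrDl.
exact: e0.
Qed.

End Meas.

Section VecMeas.
Variables (R : realType) (d : nat).
Local Notation V := 'rV[R]_d.

Definition box (p : 'rV[rat]_d * rat) : set V :=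
  [set w | forall j, `|ratr (p.1 ord0 j) - w ord0 j| < ratr p.2].

Lemma open_cover (U : set V) : open U ->
  U = \bigcup_(p : 'rV[rat]_d * rat) (box p `&` [set _ | box p `<=` U]).
Proof.
move=> oU; apply/seteqP; split; last by move=> w [p _ [bw bU]]; exact: bU.
move=> x Ux.
have : nbhs x U by apply: open_nbhs_nbhs; split.
move=> /nbhs_ballP [e /= e0 eU].
have [r] := @rat_in_itvoo R 0 (e / 2) ltac:(by rewrite divr_gt0).
rewrite in_itv /= => /andP[r0 r2].
have hq : forall j : 'I_d, exists q : rat, ratr q \in `](x ord0 j - ratr r), (x ord0 j + ratr r)[.
  by move=> j; apply: rat_in_itvoo; lra.
have [qf hqf] := choice hq.
exists (\row_j qf j, r) => //; split.
  by move=> j /=; rewrite mxE distrC ltr_distlC; have := hqf j; rewrite in_itv /=.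
move=> w bw; apply: eU; apply: ball_of_coord => // j.
have := bw j; rewrite /= mxE => h1.
have := hqf j; rewrite in_itv /= => /andP[a b].
move: h1; rewrite ltr_distlC => /andP[c e1].
rewrite ltr_distlC; apply/andP; split; lra.
Qed.

Lemma vec_meas dT (T : measurableType dT) (f : T -> vecB R d) :
  (forall j, measurable_fun setT (fun t => f t ord0 j)) -> measurable_fun setT f.
Proof.
move=> hf; apply: (@measurability _ _ _ (vecB R d) _ _ (@open V : set (set (vecB R d)))) => //.
move=> _ [U oU <-]; rewrite setTI (open_cover oU) preimage_bigcup.
apply: countable_bigcupT_measurable; first exact: countableP.
move=> p; rewrite preimage_setI; apply: measurableI.
  have -> : f @^-1` box p = \bigcap_(j in [set: 'I_d])
      ((fun t => f t ord0 j) @^-1` `](ratr (p.1 ord0 j) - ratr p.2), (ratr (p.1 ord0 j) + ratr p.2)[).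
    apply/seteqP; split => t /=.
      by move=> h j _ /=; rewrite in_itv /= -ltr_distlC; exact: h.
    by move=> h j; rewrite ltr_distlC; have := h j I; rewrite /= in_itv.
  apply: fin_bigcap_measurable; first exact: finite_finset.
  by move=> j _; rewrite -[X in measurable X]setTI; apply: hf.
case: (pselect (box p `<=` U)) => h.
  by have -> : f @^-1` [set _ | box p `<=` U] = setT by apply/seteqP; split.
by have -> : f @^-1` [set _ | box p `<=` U] = set0 by apply/seteqP; split.
Qed.

Lemma cont_meas dT (T : measurableType dT) (F : T -> vecB R d) (h : V -> V) :
  measurable_fun setT F -> continuous h -> measurable_fun setT (fun t => (h (F t) : vecB R d)).
Proof.
move=> mF /continuousP ch; apply: (@measurability _ _ _ (vecB R d) setT (fun t => (h (F t) : vecB R d)) (@open V : set (set (vecB R d)))) => //.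
move=> _ [U oU <-]; rewrite -[X in measurable X]setTI.
have -> : (fun t => (h (F t) : vecB R d)) @^-1` U = F @^-1` (h @^-1` U) by [].
have hU : measurable (h @^-1` U : set (vecB R d)) by apply: sub_sigma_algebra; exact: ch.
by rewrite setTI; exact: (mF measurableT _ hU).
Qed.

Lemma coord_comp_meas dT (T : measurableType dT) (F : T -> vecB R d) (j : 'I_d) :
  measurable_fun setT F -> measurable_fun setT (fun t => F t ord0 j).
Proof. by move=> mF; apply: (measurableT_comp (coord_meas j) mF). Qed.

End VecMeas.

Section Noise.
Variables (R : realType) (d : nat).
Local Notation I := (nat * 'I_d)%type.
Local Notation Zt := (I -> R).

Definition Rect : set (set Zt) :=
  [set A | exists (s : seq I) (B : I -> set R), [/\ uniq s, (forall i, measurable (B i)) &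
     A = \bigcap_(i in [set` s]) ((fun z : Zt => z i) @^-1` B i)]].

Definition ZT := g_sigma_algebraType Rect.

Lemma Rect_setI : setI_closed Rect.
Proof.
move=> _ _ [s1 [B1 [u1 m1 ->]]] [s2 [B2 [u2 m2 ->]]].
exists (undup (s1 ++ s2)),
  (fun i => (if i \in s1 then B1 i else setT) `&` (if i \in s2 then B2 i else setT)).
split; first exact: undup_uniq.
  by move=> i; apply: measurableI; [case: (i \in s1)|case: (i \in s2)].
apply/seteqP; split => z /=.
  move=> [h1 h2] i; rewrite /= mem_undup mem_cat => /orP hi; split.
    by case: ifP => [/h1|//]; apply.
  by case: ifP => [/h2|//]; apply.
move=> h; split => i /= hi; have := h i; rewrite /= mem_undup mem_cat.
  rewrite hi => /(_ isT) [+ _]; rewrite /= ?hi //.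
rewrite hi orbT => /(_ isT) [_]; rewrite /= ?hi //.
Qed.

Lemma Rect_setT : Rect setT.
Proof.
exists [::], (fun _ => setT); split => //.
by apply/seteqP; split => z // _ i.
Qed.

Lemma ev_meas (p : I) : measurable_fun setT (fun z : ZT => z p).
Proof.
move=> _ B mB; rewrite setTI; apply: sub_sigma_algebra.
exists [:: p], (fun _ => B); split => //.
apply/seteqP; split => z /=; first by move=> h i; rewrite /= inE => /eqP ->.
by move=> h; apply: (h p); rewrite /= inE.
Qed.

Variables (dO : measure_display) (Omega : measurableType dO) (P : probability Omega R).

Definition NG (G : nat -> Omega -> 'rV[R]_d) : Omega -> ZT :=
  fun om p => G p.1 om ord0 p.2.

Lemma NG_meas (G : nat -> Omega -> 'rV[R]_d) : (forall t j, measurable_fun setT (fun om => G t om ord0 j)) ->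
  measurable_fun setT (NG G).
Proof.
move=> hG; apply: (@measurability _ _ _ ZT setT (NG G) (Rect : set (set ZT))) => //.
move=> _ [_ [s [B [us mB ->]]] <-]; rewrite setTI.
have -> : NG G @^-1` (\bigcap_(i in [set` s]) ((fun z : Zt => z i) @^-1` B i)) =
   \bigcap_(i in [set` s]) ((fun om => G i.1 om ord0 i.2) @^-1` B i).
  by apply/seteqP; split => om /= h i si; exact: h.
apply: fin_bigcap_measurable; first exact: finite_seq.
by move=> i _; rewrite -[X in measurable X]setTI; apply: hG.
Qed.

Lemma NG_mfun (G : nat -> Omega -> 'rV[R]_d) : (forall t j, measurable_fun setT (fun om => G t om ord0 j)) ->
  NG G \in mfun.
Proof. by move=> hG; rewrite inE; exact: NG_meas. Qed.

Lemma NG_law (sigma : R) (G G' : nat -> Omega -> 'rV[R]_d) : gaussian_noise P sigma G -> gaussian_noise P sigma G' ->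
  forall A : set ZT, measurable A -> P (NG G @^-1` A) = P (NG G' @^-1` A).
Proof.
move=> [hm hl hi] [hm' hl' hi'] A mA.
pose X := mfun_Sub (NG_mfun hm); pose X' := mfun_Sub (NG_mfun hm').
have -> : P (NG G @^-1` A) = distribution P X A by [].
have -> : P (NG G' @^-1` A) = distribution P X' A by [].
apply: (@measure_unique _ R ZT (Rect : set (set ZT)) (fun _ => setT) erefl Rect_setI _ _
   (distribution P X) (distribution P X')) => //.
- by move=> _; exact: Rect_setT.
- by rewrite bigcup_const.
- move=> _ [s [B [us mB ->]]].
  change (P (NG G @^-1` (\bigcap_(i in [set` s]) ((fun z : Zt => z i) @^-1` B i))) =
          P (NG G' @^-1` (\bigcap_(i in [set` s]) ((fun z : Zt => z i) @^-1` B i)))).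
  have E : forall H : nat -> Omega -> 'rV[R]_d,
      NG H @^-1` (\bigcap_(i in [set` s]) ((fun z : Zt => z i) @^-1` B i)) =
      \bigcap_(i in [set` s]) ((fun p : I => fun om => H p.1 om ord0 p.2) i @^-1` B i).
    by move=> H; apply/seteqP; split => om /= h i si; exact: h.
  rewrite !E (hi s B us mB) (hi' s B us mB); apply: eq_bigr => i _.
  by rewrite hl // hl'.
- move=> _; change (P (NG G @^-1` setT) < +oo)%E.
  by rewrite preimage_setT probability_setT ltry.
Qed.

End Noise.

Section Iter.
Variables (R : realType) (d : nat) (PiK : 'rV[R]_d -> 'rV[R]_d) (step : 'rV[R]_d -> 'rV[R]_d)
  (w0 : 'rV[R]_d).

Fixpoint Fit (t : nat) (z : ZT R d) : 'rV[R]_d :=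
  match t with
  | 0%N => w0
  | t'.+1 => PiK (step (Fit t' z) + \row_j z (t', j))
  end.

Lemma nsgd_Fit dO (Omega : measurableType dO) (G : nat -> Omega -> 'rV[R]_d) t om :
  nsgd PiK step G w0 t om = Fit t (NG G om).
Proof.
elim: t => [//|t IH] /=; rewrite IH; congr (PiK (step _ + _)).
by apply/rowP => j; rewrite mxE.
Qed.

Variables (K : set 'rV[R]_d).

Lemma Fit_K : isproj K PiK -> K w0 -> forall t z, K (Fit t z).
Proof. move=> hp Kw t z; case: t => [|t] /=; first done. by have [] := hp (step (Fit t z) + \row_j z (t, j)). Qed.

Lemma Fit_meas (L : R) : isconv K -> isproj K PiK -> K w0 -> 0 <= L ->
  (forall x y, K x -> K y -> enorm (step x - step y) <= L * enorm (x - y)) ->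
  forall t, measurable_fun setT (Fit t : ZT R d -> vecB R d).
Proof.
move=> hc hp Kw L0 hs; elim => [|t IH]; first exact: measurable_cst.
have cP : continuous PiK.
  by apply: (@lip_cont _ _ _ 1) => // x y; rewrite mul1r; exact: (proj_nonexp hc hp).
have cS : continuous (fun x => step (PiK x)).
  apply: (@lip_cont _ _ _ L) => // x y.
  apply: le_trans (hs _ _ (proj1 (hp x)) (proj1 (hp y))) _.
  by rewrite ler_wpM2l // (proj_nonexp hc hp).
have mS : measurable_fun setT (fun z : ZT R d => (step (PiK (Fit t z)) : vecB R d)).
  exact: (cont_meas IH cS).
have mH : measurable_fun setT
    (fun z : ZT R d => (step (Fit t z) + \row_j z (t, j) : vecB R d)).
  apply: vec_meas => j.
  have -> : (fun z : ZT R d => (step (Fit t z) + \row_j0 z (t, j0)) ord0 j) =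
      (fun z => (step (PiK (Fit t z)) : vecB R d) ord0 j + z (t, j)).
    apply: funext => z; rewrite !mxE (proj_id hp) //; exact: Fit_K.
  apply: measurable_realfun.measurable_funD; first exact: coord_comp_meas.
  exact: ev_meas.
exact: (cont_meas mH cP).
Qed.

End Iter.

Section EssSup.
Variables (R : realType) (d : nat).

Lemma sqn_pair_meas : measurable_fun setT
  (fun p : (vecB R d * vecB R d)%type => sqn (p.1 - p.2)).
Proof.
rewrite /sqn; apply: measurable_sum => j.
apply: measurable_realfun.measurable_funX.
have -> : (fun p : (vecB R d * vecB R d)%type => (p.1 - p.2) ord0 j) =
   (fun p : (vecB R d * vecB R d)%type => p.1 ord0 j) \- (fun p : (vecB R d * vecB R d)%type => p.2 ord0 j).
  by apply: funext => p; rewrite !mxE.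
apply: measurable_realfun.measurable_funB.
  exact: (measurableT_comp (coord_meas j) measurable_fst).
exact: (measurableT_comp (coord_meas j) measurable_snd).
Qed.

Lemma ess_sup_le (g : probability (vecB R d * vecB R d)%type R) (M : R) : 0 <= M ->
  g [set p | M ^+ 2 < sqn (p.1 - p.2)] = 0%E ->
  (ess_sup g (fun p : (vecB R d * vecB R d)%type => (enorm (p.1 - p.2))%:E) <= M%:E)%E.
Proof.
move=> M0 gN; apply: ereal_inf_lbound => /=.
exists [set p | M ^+ 2 < sqn (p.1 - p.2)]; split => //.
  rewrite -[X in measurable X]setTI.
  have := sqn_pair_meas measurableT (measurable_itv `]M ^+ 2, +oo[).
  by congr measurable; apply/seteqP; split => p /=; rewrite in_itv /= andbT.
move=> p /= /negP; rewrite lee_fin -ltNge => h.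
rewrite -enorm_sq; rewrite ltr_pXn2r // ?nnegrE //; exact: enorm_ge0.
Qed.

End EssSup.
Lemma Dseq_ge0 (R : realType) (c eta Kc : R) (n : nat) t : 0 <= c -> 0 < eta -> 0 < Kc ->
  0 <= Dseq c eta Kc n t.
Proof.
move=> c0 e0 K0; have h2 : 0 <= 2 * eta * Kc by nra.
elim: t => [//|t IH] /=; rewrite le_min; apply/andP; split.
  by apply: addr_ge0; [exact: mulr_ge0|rewrite divr_ge0].
exact: addr_ge0.
Qed.

Unset Implicit Arguments.

Theorem mainTheorem7 (R : realType) (d n : nat) (X : Type)
  (loss : X -> 'rV[R]_d -> R) (grad : X -> 'rV[R]_d -> 'rV[R]_d)
  (K : set 'rV[R]_d) (D : R) (PiK : 'rV[R]_d -> 'rV[R]_d)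
  (eta Kc sigma c : R) (Dat Dat' : 'I_n -> X)
  (dO : measure_display) (Omega : measurableType dO) (P : probability Omega R)
  (G G' : nat -> Omega -> 'rV[R]_d) (w0 : 'rV[R]_d) :
  (* K nonempty, closed, convex, with diameter at most D *)
  K !=set0 -> closed K ->
  (forall x y (l : R), K x -> K y -> 0 <= l <= 1 -> K (l *: x + (1 - l) *: y)) ->
  (forall x y, K x -> K y -> enorm (x - y) <= D) ->
  (* PiK is the Euclidean projection onto K *)
  (forall x, K (PiK x) /\ (forall y, K y -> enorm (x - PiK x) <= enorm (x - y))) ->
  (* grad z x is the gradient at x in K of the differentiable loss l(.; z) *)
  (forall z x, K x ->
     differentiable (loss z) x /\ (forall v, 'd (loss z) x v = edot (grad z x) v)) ->
  (* adjacent datasets: differ in exactly one index *)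
  (exists j : 'I_n, Dat j <> Dat' j /\ (forall i, i != j -> Dat i = Dat' i)) ->
  0 < eta -> 0 < Kc -> 0 < sigma -> 0 <= c ->
  (* the gradient update maps psi_t and psi'_t are c-Lipschitz (on K) *)
  (forall x y, K x -> K y ->
     enorm (psi eta Kc (fun i => grad (Dat i)) x - psi eta Kc (fun i => grad (Dat i)) y)
       <= c * enorm (x - y)) ->
  (forall x y, K x -> K y ->
     enorm (psi eta Kc (fun i => grad (Dat' i)) x - psi eta Kc (fun i => grad (Dat' i)) y)
       <= c * enorm (x - y)) ->
  (* the noises G_t, G'_t are i.i.d. N(0, sigma^2 I_d) *)
  gaussian_noise P sigma G -> gaussian_noise P sigma G' ->
  (* common initialization W_0 = W'_0 = w0 in K *)
  K w0 ->
  forall t : nat,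
    (Winf (law P (nsgd PiK (psi eta Kc (fun i => grad (Dat i))) G w0 t))
          (law P (nsgd PiK (psi eta Kc (fun i => grad (Dat' i))) G' w0 t))
     <= (Num.min (Dseq c eta Kc n t) D)%:E)%E.
Proof.
move=> Kne Kcl hconv hdiam hproj hgrad [j [_ hj]] eta0 Kc0 sigma0 c0 hlip hlip' gn gn' Kw0 t.
have hc : isconv K := hconv.
have hp : isproj K PiK := hproj.
have n0 : (0 < n)%N := leq_ltn_trans (leq0n _) (ltn_ord j).
set step := psi eta Kc (fun i => grad (Dat i)).
set step' := psi eta Kc (fun i => grad (Dat' i)).
have D0 : 0 <= D by have := hdiam _ _ Kw0 Kw0; rewrite subrr enorm0.
set M := Num.min (Dseq c eta Kc n t) D.
have M0 : 0 <= M by rewrite le_min D0 Dseq_ge0.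
have pw : forall t z, enorm (Fit PiK step w0 t z - Fit PiK step' w0 t z)
    <= Num.min (Dseq c eta Kc n t) D.
  elim => [|s IH] z.
    by rewrite /= subrr enorm0 le_min lexx D0.
    rewrite le_min; apply/andP; split; last by apply: hdiam; [exact: (Fit_K step hp Kw0)|exact: (Fit_K step' hp Kw0)].
  set x := Fit PiK step w0 s z; set y := Fit PiK step' w0 s z.
  have Kx : K x by exact: (Fit_K step hp Kw0).
  have Ky : K y by exact: (Fit_K step' hp Kw0).
  have IH1 : enorm (x - y) <= Dseq c eta Kc n s by move: (IH z); rewrite le_min => /andP[].
  rewrite /=; apply: le_trans (proj_nonexp hc hp _ _) _.
  rewrite opprD addrACA subrr addr0 le_min; apply/andP; split.
    have -> : step x - step' y = (step x - step y) + (step y - step' y).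
      by rewrite addrA subrK.
    apply: le_trans (enormD _ _) _; apply: lerD.
      apply: le_trans (hlip _ _ Kx Ky) _; exact: ler_wpM2l.
    by apply: (psi_bound1 eta0 Kc0 n0 (j := j)) => i /hj ->.
  apply: le_trans (psi_bound2 _ _ eta0 Kc0 n0 _ _) _.
  by rewrite lerD2r.
case: (gn) => hm _ _.
have mF := Fit_meas hc hp Kw0 c0 hlip t.
have mF' := Fit_meas hc hp Kw0 c0 hlip' t.
have mNG := NG_meas hm.
pose pr := fun om => ((Fit PiK step w0 t (NG G om) : vecB R d), (Fit PiK step' w0 t (NG G om) : vecB R d)).
have mpr : measurable_fun setT pr.
  apply: measurable_fun_pair; [exact: measurableT_comp mF mNG|exact: measurableT_comp mF' mNG].
have prm : pr \in mfun by rewrite inE.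
pose g := distribution P (mfun_Sub prm).
apply: (@le_trans _ _ (ess_sup g (fun p : (vecB R d * vecB R d)%type => (enorm (p.1 - p.2))%:E))).
  apply: ereal_inf_lbound; exists g => //; split => A mA.
    change (P (pr @^-1` (A `*` setT)) = P (nsgd PiK step G w0 t @^-1` A)).
    by apply: congr1; apply/seteqP; split => om /=; rewrite nsgd_Fit //; case.
  change (P (pr @^-1` (setT `*` A)) = P (nsgd PiK step' G' w0 t @^-1` A)).
  have mA' : measurable (Fit PiK step' w0 t @^-1` A : set (ZT R d)).
    by rewrite -[X in measurable X]setTI; exact: mF'.
  have -> : pr @^-1` (setT `*` A) = NG G @^-1` (Fit PiK step' w0 t @^-1` A).
    by apply/seteqP; split => om /=; [case|].
  rewrite (NG_law gn gn' mA'); apply: congr1.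
  by apply/seteqP; split => om /=; rewrite nsgd_Fit.
apply: ess_sup_le => //.
change (P (pr @^-1` [set p | M ^+ 2 < sqn (p.1 - p.2)]) = 0%E).
have -> : pr @^-1` [set p | M ^+ 2 < sqn (p.1 - p.2)] = set0.
  apply/seteqP; split => om //=; rewrite -enorm_sq ltNge => /negP; apply.
  by rewrite ler_pXn2r ?nnegrE ?enorm_ge0 // pw.
exact: measure0.
Qed.
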